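(* Let $k\ge2$ and let $z_{ij}\in\mathbb{C}$, $1\le i<j\le k$, satisfy $|z_{ij}|\le1$; set $z_{ji}=\overline{z_{ij}}$. Then the linear map $\Phi_{2k}^{(\mathbf z)}:M_{2k}(\mathbb{C})\to M_{2k}(\mathbb{C})$ defined below is positive.
   Context: Write $X\in M_{2k}(\mathbb{C})$ as a $k\times k$ block matrix $X=(X_{ij})_{i,j=1}^k$ with $X_{ij}\in M_2(\mathbb{C})$. Let $R_2:M_2(\mathbb{C})\to M_2(\mathbb{C})$, $R_2(Y)=\mathbb{I}_2\operatorname{Tr}Y-Y$. Define $\Phi_{2k}^{(\mathbf z)}(X)$ as the $k\times k$ block matrix with diagonal blocks $\frac{1}{2(k-1)}(\operatorname{Tr}X-\operatorname{Tr}X_{ii})\mathbb{I}_2$ and, for $i\ne j$, off-diagonal blocks $-\frac{z_{ij}}{2(k-1)}\big(X_{ij}-R_2(X_{ji})\big)$. (For all $z_{ij}=1$ this is the generalized Robertson map $\Phi_{2k}$.) A linear map is positive if it sends positive semidefinite matrices to positive semidefinite matrices. *)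

(* Defs.v *)
From HB Require Import structures.
From mathcomp Require Import all_boot all_order all_algebra.
Set Implicit Arguments. Unset Strict Implicit. Unset Printing Implicit Defensive.
Import Order.TTheory GRing.Theory Num.Theory.
Local Open Scope ring_scope.

(* Positive semidefinite matrix: v^* A v >= 0 for every column vector v
   (over a numClosedFieldType, 0 <= x forces x real). *)
Definition psdmx (C : numClosedFieldType) (n : nat) (A : 'M[C]_n) : Prop :=
  forall v : 'cV[C]_n, 0 <= ((map_mx Num.conj v)^T *m A *m v) 0 0.

Lemma bidx_proof (k : nat) (i : 'I_k) (p : 'I_2) : (2 * i + p < 2 * k)%N.
Proof.
apply: (@leq_trans (2 * i.+1)%N).
  by rewrite mulnS addnC ltn_add2r ltn_ord.
by rewrite leq_mul2l ltn_ord orbT.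
Qed.
Definition bidx (k : nat) (i : 'I_k) (p : 'I_2) : 'I_(2 * k) :=
  Ordinal (bidx_proof i p).

Lemma bblk_proof (k : nat) (a : 'I_(2 * k)) : (a %/ 2 < k)%N.
Proof. by rewrite ltn_divLR // [X in (_ < X)%N]mulnC ltn_ord. Qed.
Definition bblk (k : nat) (a : 'I_(2 * k)) : 'I_k := Ordinal (bblk_proof a).

Lemma bpos_proof (k : nat) (a : 'I_(2 * k)) : (a %% 2 < 2)%N.
Proof. by rewrite ltn_pmod. Qed.
Definition bpos (k : nat) (a : 'I_(2 * k)) : 'I_2 := Ordinal (bpos_proof a).

Definition blk (C : numClosedFieldType) (k : nat) (X : 'M[C]_(2 * k))
  (i j : 'I_k) : 'M[C]_2 := \matrix_(p, q) X (bidx i p) (bidx j q).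

Definition R2 (C : numClosedFieldType) (Y : 'M[C]_2) : 'M[C]_2 := (\tr Y)%:M - Y.

Definition zfull (C : numClosedFieldType) (k : nat) (z : 'I_k -> 'I_k -> C)
  (i j : 'I_k) : C := if (i < j)%N then z i j else Num.conj (z j i).

Definition Phiz (C : numClosedFieldType) (k : nat) (z : 'I_k -> 'I_k -> C)
  (X : 'M[C]_(2 * k)) : 'M[C]_(2 * k) :=
  \matrix_(a, b)
    let i := bblk a in let j := bblk b in
    let p := bpos a in let q := bpos b in
    if i == j then
      ((\tr X - \tr (blk X i i)) / (2 * (k - 1))%:R) * (p == q)%:R
    else
      - (zfull z i j / (2 * (k - 1))%:R) * (blk X i j - R2 (blk X j i)) p q.

(* Main.v *)
Require Import Defs.
From HB Require Import structures.
From mathcomp Require Import all_boot all_order all_algebra.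
From Stdlib Require Import Ring.
Import Order.TTheory GRing.Theory Num.Theory.
Set Implicit Arguments. Unset Strict Implicit. Unset Printing Implicit Defensive.
Local Open Scope ring_scope.

Section Pair.
Variable C : numClosedFieldType.
Definition addC (x y : C) : C := x + y.
Definition mulC (x y : C) : C := x * y.
Definition oppC (x : C) : C := - x.
Definition zeroC : C := 0.
Definition oneC : C := 1.
Definition subC (x y : C) : C := addC x (oppC y).
Lemma RT : @ring_theory C zeroC oneC addC mulC subC oppC eq.
Proof. rewrite /addC/mulC/oppC/zeroC/oneC/subC.
split; move=> *; rewrite ?addrA ?mulrA //=; try solve [by rewrite add0r|by rewrite addrC|by rewrite mul1r|by rewrite mulrC|by rewrite mulrDl|by rewrite subrr]. Qed.
Add Ring Cring : RT.
Lemma addE (x y : C) : x + y = addC x y. Proof. by []. Qed.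
Lemma mulE (x y : C) : x * y = mulC x y. Proof. by []. Qed.
Lemma oppE (x : C) : - x = oppC x. Proof. by []. Qed.
Lemma zeroE : 0 = zeroC :> C. Proof. by []. Qed.
Lemma oneE : 1 = oneC :> C. Proof. by []. Qed.
Ltac cring := rewrite ?addE ?mulE ?oppE ?zeroE ?oneE; match goal with |- @eq _ ?a ?b => change (@eq C a b) end; ring.

Definition i0 : 'I_2 := ord0.
Definition i1 : 'I_2 := ord_max.
Lemma sum2 (F : 'I_2 -> C) : \sum_(r < 2) F r = F i0 + F i1.
Proof. rewrite big_ord_recr /= big_ord1. congr (F _ + _). by apply: val_inj. Qed.
Lemma e00 : (i0 == i0) = true. Proof. by []. Qed.
Lemma e01 : (i0 == i1) = false. Proof. by []. Qed.
Lemma e10 : (i1 == i0) = false. Proof. by []. Qed.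
Lemma e11 : (i1 == i1) = true. Proof. by []. Qed.

Definition mk2 (x y : C) : 'I_2 -> C := fun r => if val r == 0%N then x else y.
Lemma mk2_0 x y : mk2 x y i0 = x. Proof. by []. Qed.
Lemma mk2_1 x y : mk2 x y i1 = y. Proof. by []. Qed.

Definition Q4 (A B Cm D : 'I_2 -> 'I_2 -> C) (a b : 'I_2 -> C) : C :=
  \sum_(r < 2) \sum_(s < 2) ((a r)^* * A r s * a s + (a r)^* * Cm r s * b s
     + (b r)^* * D r s * a s + (b r)^* * B r s * b s).
Definition nrm (p : 'I_2 -> C) : C := \sum_(r < 2) (p r)^* * p r.
Definition tr2 (M : 'I_2 -> 'I_2 -> C) : C := \sum_(r < 2) M r r.
Definition Sij (p : 'I_2 -> C) (M N : 'I_2 -> 'I_2 -> C) (q : 'I_2 -> C) : C :=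
  \sum_(r < 2) \sum_(s < 2) (p r)^* * (M r s - ((tr2 N) *+ (r == s) - N r s)) * q s.
Definition gpair (A B Cm D : 'I_2 -> 'I_2 -> C) (p q : 'I_2 -> C) (zeta : C) : C :=
  nrm p * tr2 B - zeta * Sij p Cm D q + (nrm q * tr2 A - zeta^* * Sij q D Cm p).

Lemma cjM (x y : C) : (x * y)^* = x^* * y^*. Proof. exact: rmorphM. Qed.
Lemma cjD (x y : C) : (x + y)^* = x^* + y^*. Proof. exact: rmorphD. Qed.
Lemma cjN (x : C) : (- x)^* = - x^*. Proof. exact: rmorphN. Qed.
Lemma cj0 : (0 : C)^* = 0. Proof. exact: rmorph0. Qed.
Lemma cj1 : (1 : C)^* = 1. Proof. exact: rmorph1. Qed.
Lemma cjK (x : C) : x^*^* = x. Proof. exact: conjCK. Qed.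
Ltac expand := rewrite /gpair /Q4 /Sij /nrm /tr2 !sum2 ?mk2_0 ?mk2_1 ?e00 ?e01 ?e10 ?e11 ?mulr1n ?mulr0n
  ?(cjM, cjD, cjN, cj0, cj1, cjK).

Lemma nrm_ge0 p : 0 <= nrm p.
Proof. rewrite /nrm; apply: sumr_ge0 => r _; rewrite mulrC; exact: mul_conjC_ge0. Qed.

Lemma pair_fun (A B Cm D : 'I_2 -> 'I_2 -> C) (p q : 'I_2 -> C) (zeta : C)
  (hz : `|zeta| <= 1)
  (H : forall a b : 'I_2 -> C, 0 <= Q4 A B Cm D a b) :
  0 <= gpair A B Cm D p q zeta.
Proof.
have hA : 0 <= tr2 A.
  have -> : tr2 A = Q4 A B Cm D (mk2 1 0) (mk2 0 0) + Q4 A B Cm D (mk2 0 1) (mk2 0 0).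
    expand; cring.
  by apply: addr_ge0.
have hB : 0 <= tr2 B.
  have -> : tr2 B = Q4 A B Cm D (mk2 0 0) (mk2 1 0) + Q4 A B Cm D (mk2 0 0) (mk2 0 1).
    expand; cring.
  by apply: addr_ge0.
set s := nrm q. set t := nrm p.
have key : t * s * gpair A B Cm D p q zeta =
  Q4 A B Cm D (mk2 (s * p i0) (s * p i1)) (mk2 (- (zeta * t * q i0)) (- (zeta * t * q i1)))
  + Q4 A B Cm D (mk2 (- (s * (p i1)^*)) (s * (p i0)^*)) (mk2 (- (zeta^* * t * (q i1)^*)) (zeta^* * t * (q i0)^*))
  + (1 - zeta * zeta^*) * (t * t * s) * tr2 B.
  rewrite /s /t; expand; cring.
have hz1 : 0 <= 1 - zeta * zeta^*.
  by rewrite -normCK subr_ge0 expr_le1 // normr_ge0.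
have ht : 0 <= t by apply: nrm_ge0.
have hs : 0 <= s by apply: nrm_ge0.
have zero2 : forall u : 'I_2 -> C, nrm u = 0 -> u i0 = 0 /\ u i1 = 0.
  move=> u; rewrite /nrm sum2 => /eqP.
  rewrite paddr_eq0; last 2 first.
  - by rewrite mulrC mul_conjC_ge0.
  - by rewrite mulrC mul_conjC_ge0.
  by rewrite ![_^* * _]mulrC !mul_conjC_eq0 => /andP[/eqP -> /eqP ->].
have [t0|tn0] := eqVneq t 0.
  have [hp0 hp1] := zero2 _ t0.
  have -> : gpair A B Cm D p q zeta = s * tr2 A.
    rewrite /s; expand; rewrite hp0 hp1 ?cj0; cring.
  exact: mulr_ge0.
have [s0|sn0] := eqVneq s 0.
  have [hq0 hq1] := zero2 _ s0.
  have -> : gpair A B Cm D p q zeta = t * tr2 B.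
    rewrite /t; expand; rewrite hq0 hq1 ?cj0; cring.
  exact: mulr_ge0.
have tsp : 0 < t * s by apply: mulr_gt0; rewrite lt_def ?tn0 ?sn0 ?ht ?hs.
rewrite -(pmulr_rge0 _ tsp) key.
apply: addr_ge0; first by apply: addr_ge0; apply: H.
by repeat apply: mulr_ge0.
Qed.

Definition qf k (M : 'I_k -> 'I_2 -> 'I_k -> 'I_2 -> C) (W : 'I_k -> 'I_2 -> C) : C :=
  \sum_(i < k) \sum_(j < k) \sum_(p < 2) \sum_(q < 2) (W i p)^* * M i p j q * W j q.

Lemma bblk_bidx k (i : 'I_k) (p : 'I_2) : bblk (bidx i p) = i.
Proof. apply: val_inj => /=. by rewrite mulnC divnMDl // divn_small ?addn0 // ltn_ord. Qed.
Lemma bpos_bidx k (i : 'I_k) (p : 'I_2) : bpos (bidx i p) = p.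
Proof. apply: val_inj => /=. by rewrite mulnC modnMDl modn_small // ltn_ord. Qed.
Lemma bidx_bblk k (a : 'I_(2 * k)) : bidx (bblk a) (bpos a) = a.
Proof. apply: val_inj => /=. by rewrite mulnC -divn_eq. Qed.

Lemma sum_bidx k (F : 'I_(2 * k) -> C) :
  \sum_a F a = \sum_(i < k) \sum_(p < 2) F (bidx i p).
Proof.
rewrite pair_big /= (reindex (fun ip : 'I_k * 'I_2 => bidx ip.1 ip.2)) /=.
  by apply: eq_bigr.
apply: onW_bij; exists (fun a => (bblk a, bpos a)).
  by move=> [i p]; rewrite /= bblk_bidx bpos_bidx.
by move=> a; rewrite bidx_bblk.
Qed.

Lemma quadE k (M : 'M[C]_(2 * k)) (v : 'cV[C]_(2 * k)) :
  ((map_mx Num.conj v)^T *m M *m v) 0 0 =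
  qf (fun i p j q => M (bidx i p) (bidx j q)) (fun i p => v (bidx i p) 0).
Proof.
rewrite mxE.
under eq_bigr => b _ do rewrite mxE mulr_suml.
rewrite exchange_big /= sum_bidx /qf.
apply: eq_bigr => i _.
rewrite -exchange_big /= sum_bidx.
apply: eq_bigr => j _; rewrite exchange_big /=.
apply: eq_bigr => p _; apply: eq_bigr => q _.
by rewrite !mxE.
Qed.

Lemma sum_two k (i j : 'I_k) (F : 'I_k -> C) : i != j ->
  (forall l, l != i -> l != j -> F l = 0) -> \sum_l F l = F i + F j.
Proof.
move=> hij h0; rewrite (bigD1 i) //= (bigD1 j) /=; last by rewrite eq_sym.
rewrite big1 ?addr0 // => l /andP[hli hlj]; exact: h0.
Qed.

Definition blkf k (Xb : 'I_k -> 'I_2 -> 'I_k -> 'I_2 -> C) (i j : 'I_k) : 'I_2 -> 'I_2 -> C :=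
  fun r s => Xb i r j s.

Lemma core k (hk : (1 < k)%N) (Xb : 'I_k -> 'I_2 -> 'I_k -> 'I_2 -> C) (zf : 'I_k -> 'I_k -> C)
  (hzf : forall i j, i != j -> zf j i = (zf i j)^*) (hzn : forall i j, i != j -> `|zf i j| <= 1)
  (H : forall W, 0 <= qf Xb W) (V : 'I_k -> 'I_2 -> C) :
  0 <= qf (fun i p j q => if i == j then
       ((\sum_(l < k) \sum_(r < 2) Xb l r l r - \sum_(r < 2) Xb i r i r) / (2 * (k - 1))%:R) * (p == q)%:R
     else - (zf i j / (2 * (k - 1))%:R) * (Xb i p j q - ((\sum_(r < 2) Xb j r i r) *+ (p == q) - Xb j p i q))) V.
Proof.
set c : C := (2 * (k - 1))%:R.
have cpos : 0 < c by rewrite ltr0n muln_gt0 subn_gt0 hk.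
pose g i j := nrm (V i) * tr2 (blkf Xb j j) - zf i j * Sij (V i) (blkf Xb i j) (blkf Xb j i) (V j).
pose F i j := if i == j then 0 else g i j.
have step1 : qf (fun i p j q => if i == j then
       ((\sum_(l < k) \sum_(r < 2) Xb l r l r - \sum_(r < 2) Xb i r i r) / c) * (p == q)%:R
     else - (zf i j / c) * (Xb i p j q - ((\sum_(r < 2) Xb j r i r) *+ (p == q) - Xb j p i q))) V
   = c^-1 * \sum_i \sum_j F i j.
  rewrite /qf mulr_sumr; apply: eq_bigr => i _.
  rewrite (bigD1 i) //= [in RHS](bigD1 i) //= /F eqxx add0r.
  have e1 : \sum_(p < 2) \sum_(q < 2) (V i p)^* *
        ((\sum_(l < k) \sum_(r < 2) Xb l r l r - \sum_(r < 2) Xb i r i r) / c *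
         (p == q)%:R) * V i q
     = c^-1 * (nrm (V i) * \sum_(j < k | j != i) \sum_(r < 2) Xb j r j r).
    rewrite (bigD1 i) //=.
    move: (\sum_(j < k | j != i) \sum_(r < 2) Xb j r j r) => T.
    expand; cring.
  have e2 : \sum_(i2 < k | i2 != i) \sum_(p < 2) \sum_(q < 2)
           (V i p)^* *
           (if i == i2
            then
             (\sum_(l < k) \sum_(r < 2) Xb l r l r - \sum_(r < 2) Xb i r i r) /
             c * (p == q)%:R
            else
             - (zf i i2 / c) *
             (Xb i p i2 q -
              ((\sum_(r < 2) Xb i2 r i r) *+ (p == q) - Xb i2 p i q))) *
           V i2 q
      = \sum_(j < k | j != i) c^-1 * - (zf i j * Sij (V i) (blkf Xb i j) (blkf Xb j i) (V j)).
    apply: eq_bigr => j hj; rewrite eq_sym (negbTE hj) /blkf /=.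
    expand; cring.
  have e3 : \sum_(j < k | j != i) (if i == j then 0 else g i j) = \sum_(j < k | j != i) g i j.
    by apply: eq_bigr => j hj; rewrite eq_sym (negbTE hj).
  rewrite e1 e2 e3 /g sumrB -!mulr_sumr sumrN mulrDr.
  by [].
rewrite step1; apply: mulr_ge0; first by rewrite invr_ge0 ltW.
have hS : \sum_i \sum_j F i j = \sum_i \sum_j F j i by rewrite exchange_big.
rewrite -(pmulrn_lge0 _ (isT : (0 < 2)%N)) mulr2n {2}hS -big_split /=.
apply: sumr_ge0 => i _; rewrite -big_split /=; apply: sumr_ge0 => j _.
case: (eqVneq i j) => [<-|hij]; first by rewrite /F eqxx addr0.
have hji : j != i by rewrite eq_sym.
rewrite /F (negbTE hij) (negbTE hji) /g (hzf _ _ hij).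
apply: (@pair_fun (blkf Xb i i) (blkf Xb j j) (blkf Xb i j) (blkf Xb j i) (V i) (V j) (zf i j)).
  exact: hzn.
move=> a b.
pose W l r := if l == i then a r else if l == j then b r else 0.
have := H W.
suff -> : qf Xb W = Q4 (blkf Xb i i) (blkf Xb j j) (blkf Xb i j) (blkf Xb j i) a b by [].
rewrite /qf (sum_two hij); last first.
  move=> l hli hlj; apply: big1 => m _; apply: big1 => p _; apply: big1 => q _.
  by rewrite /W (negbTE hli) (negbTE hlj) cj0 !mul0r.
rewrite !(sum_two hij); last first.
- move=> m hmi hmj; apply: big1 => p _; apply: big1 => q _.
  by rewrite /W (negbTE hmi) (negbTE hmj) mulr0.
- move=> m hmi hmj; apply: big1 => p _; apply: big1 => q _.
  by rewrite /W (negbTE hmi) (negbTE hmj) mulr0.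
rewrite /W !eqxx (negbTE hji) /= /blkf.
expand; cring.
Qed.
End Pair.

Lemma qf_ext (C : numClosedFieldType) k (M M' : 'I_k -> 'I_2 -> 'I_k -> 'I_2 -> C) (W W' : 'I_k -> 'I_2 -> C) :
  (forall i p j q, M i p j q = M' i p j q) -> (forall i p, W i p = W' i p) -> qf M W = qf M' W'.
Proof.
move=> hM hW; rewrite /qf; apply: eq_bigr => i _; apply: eq_bigr => j _.
apply: eq_bigr => p _; apply: eq_bigr => q _; by rewrite hM !hW.
Qed.

Theorem mainTheorem7 (C : numClosedFieldType) (k : nat) (hk : (2 <= k)%N)
  (z : 'I_k -> 'I_k -> C)
  (hz : forall i j : 'I_k, (i < j)%N -> `|z i j| <= 1) :
  forall X : 'M[C]_(2 * k), psdmx X -> psdmx (Phiz z X).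
Proof.
move=> X hX v; rewrite quadE.
have H : forall W, 0 <= qf (fun i p j q => X (bidx i p) (bidx j q)) W.
  move=> W; have := hX (\col_a W (bblk a) (bpos a)); rewrite quadE.
  by rewrite (qf_ext (M' := fun i p j q => X (bidx i p) (bidx j q)) (W' := W)) // => i p; rewrite mxE bblk_bidx bpos_bidx.
have hzf : forall i j : 'I_k, i != j -> zfull z j i = (zfull z i j)^*.
  move=> i j hij; have [h|h|h] := ltngtP i j.
  - by rewrite /zfull h ltnNge (ltnW h).
  - by rewrite /zfull h ltnNge (ltnW h) conjCK.
  - by move: hij; rewrite (val_inj h) eqxx.
have hzn : forall i j : 'I_k, i != j -> `|zfull z i j| <= 1.
  move=> i j hij; have [h|h|h] := ltngtP i j.
  - by rewrite /zfull h hz.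
  - by rewrite /zfull ltnNge (ltnW h) /= norm_conjC hz.
  - by move: hij; rewrite (val_inj h) eqxx.
have := core hk hzf hzn H (fun i p => v (bidx i p) 0).
rewrite (qf_ext (M' := fun i p j q => Phiz z X (bidx i p) (bidx j q)) (W' := fun i p => v (bidx i p) 0)) //.
move=> i p j q.
rewrite /Phiz !mxE /= !bblk_bidx !bpos_bidx.
have trb : forall a b : 'I_k, \tr (blk X a b) = \sum_(r < 2) X (bidx a r) (bidx b r).
  by move=> a b; rewrite /mxtrace; apply: eq_bigr => r _; rewrite mxE.
by rewrite !trb /mxtrace sum_bidx.
Qed.
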